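(* Let $R=\mathbb{Z}[i,\tfrac{1}{\sqrt{2}}]$. For all $m,n\in\mathbb{N}$, a complex $2^{m}\times 2^{n}$ matrix $M$ is the standard interpretation $\llbracket D\rrbracket$ of some diagram $D:n\to m$ of the $\frac{\pi}{4}$-fragment ZX-calculus if and only if every entry of $M$ lies in $R$. That is, the $\frac{\pi}{4}$-fragment ZX-calculus corresponds exactly to the matrices over $R$.
   Context: The $\frac{\pi}{4}$-fragment ZX-calculus is built as follows. Its diagrams $D:k\to l$ ($k$ inputs, $l$ outputs) are generated from the generators below, using sequential composition $\circ$ and parallel composition (tensor) $\otimes$. The generators and their standard interpretations $\llbracket\cdot\rrbracket$ as complex matrices are: - the green spider $R_Z^{(n,m)}:n\to m$ for any $n,m\in\mathbb{N}$, with $\llbracket R_Z^{(n,m)}\rrbracket=|0\rangle^{\otimes m}\langle 0|^{\otimes n}+|1\rangle^{\otimes m}\langle 1|^{\otimes n}$; - the green phase $A_\alpha:1\to1$ for $\alpha\in\{\frac{k\pi}{4}: k=0,\dots,7\}$, with $\llbracket A_\alpha\rrbracket=|0\rangle\langle0|+e^{i\alpha}|1\rangle\langle1|$; - the Hadamard gate $H:1\to1$, with $\llbracket H\rrbracket=\frac{1}{\sqrt2}\begin{pmatrix}1&1\\1&-1\end{pmatrix}$; - the swap $\sigma:2\to2$, with $\llbracket\sigma\rrbracket=\sum_{a,b\in\{0,1\}}|ba\rangle\langle ab|$; - the identity wire $\mathbb{I}:1\to1$, interpreted as the $2\times2$ identity; - the empty diagram $e:0\to0$, interpreted as the scalar $1$;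 - the cap $C_a:0\to2$, with $\llbracket C_a\rrbracket=|00\rangle+|11\rangle$; - the cup $C_u:2\to0$, with $\llbracket C_u\rrbracket=\langle00|+\langle11|$. The interpretation is extended to all diagrams by $\llbracket D_1\circ D_2\rrbracket=\llbracket D_1\rrbracket\llbracket D_2\rrbracket$ (matrix product) and $\llbracket D_1\otimes D_2\rrbracket=\llbracket D_1\rrbracket\otimes\llbracket D_2\rrbracket$ (Kronecker product). A diagram $n\to m$ is thus interpreted as a $2^m\times 2^n$ matrix. *)

(* Defs.v *)
(* Complex numbers are modelled by an arbitrary
   numClosedFieldType C (e.g. algC, or complex R over a realType R). *)
From HB Require Import structures.
From mathcomp Require Import all_boot all_order all_algebra.
From mathcomp Require Import mxtens.
Set Implicit Arguments. Unset Strict Implicit. Unset Printing Implicit Defensive.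
Import Order.TTheory GRing.Theory Num.Theory.
Local Open Scope ring_scope.

(* Diagrams D : n -> m (n inputs, m outputs) of the pi/4-fragment ZX-calculus. *)
Inductive diagram : nat -> nat -> Type :=
| ZSpider (n m : nat) : diagram n m
| ZPhase (k : 'I_8) : diagram 1 1
| Had : diagram 1 1
| Swap : diagram 2 2
| IdW : diagram 1 1
| Empty : diagram 0 0
| Cap : diagram 0 2
| Cup : diagram 2 0
| Comp (n k m : nat) : diagram k m -> diagram n k -> diagram n m
| Tens (n1 m1 n2 m2 : nat) :
      diagram n1 m1 -> diagram n2 m2 -> diagram (n1 + n2) (m1 + m2).

Section Interp.
Variable C : numClosedFieldType.

Definition omega8 : C := (1 + 'i) / sqrtC 2.

(* Kronecker product on qubit spaces: basis index of |b_1 ... b_m> is the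
   binary number b_1...b_m (b_1 most significant). *)
Definition kron (n1 m1 n2 m2 : nat)
  (A : 'M[C]_(2 ^ m1, 2 ^ n1)) (B : 'M[C]_(2 ^ m2, 2 ^ n2))
  : 'M[C]_(2 ^ (m1 + m2), 2 ^ (n1 + n2)) :=
  castmx (esym (expnD 2 m1 m2), esym (expnD 2 n1 n2)) (tensmx A B).

Fixpoint interp (n m : nat) (D : diagram n m) : 'M[C]_(2 ^ m, 2 ^ n) :=
  match D in diagram n m return 'M[C]_(2 ^ m, 2 ^ n) with
  | ZSpider n m => \matrix_(i, j)
       ((((i : nat) == 0%N) && ((j : nat) == 0%N))%:R
        + (((i : nat) == (2 ^ m).-1) && ((j : nat) == (2 ^ n).-1))%:R)
  | ZPhase k => \matrix_(i, j)
       (if (i : nat) == (j : nat) then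
          (if (i : nat) == 0%N then 1 else omega8 ^+ k) else 0)
  | Had => \matrix_(i, j) ((sqrtC 2)^-1 * (-1) ^+ ((i : nat) * (j : nat)))
  | Swap => \matrix_(i, j)
       (((i : nat) == 2 * ((j : nat) %% 2) + (j : nat) %/ 2)%N%:R)
  | IdW => 1%:M
  | Empty => 1%:M
  | Cap => \matrix_(i, j) ((((i : nat) == 0%N) || ((i : nat) == 3%N))%:R)
  | Cup => \matrix_(i, j) ((((j : nat) == 0%N) || ((j : nat) == 3%N))%:R)
  | Comp n k m D1 D2 => interp D1 *m interp D2
  | Tens n1 m1 n2 m2 D1 D2 => kron (interp D1) (interp D2)
  end.

Inductive in_Zi_isqrt2 : C -> Prop :=
| inR_one : in_Zi_isqrt2 1
| inR_i : in_Zi_isqrt2 'i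
| inR_isqrt2 : in_Zi_isqrt2 (sqrtC 2)^-1
| inR_add x y : in_Zi_isqrt2 x -> in_Zi_isqrt2 y -> in_Zi_isqrt2 (x + y)
| inR_opp x : in_Zi_isqrt2 x -> in_Zi_isqrt2 (- x)
| inR_mul x y : in_Zi_isqrt2 x -> in_Zi_isqrt2 y -> in_Zi_isqrt2 (x * y).

End Interp.

(* Main.v *)
Require Import Defs.
From HB Require Import structures.
From Stdlib Require Import ZArith.
From mathcomp Require Import all_boot all_order all_algebra.
From mathcomp Require Import mxtens ssrZ ring zify.
Set Implicit Arguments. Unset Strict Implicit. Unset Printing Implicit Defensive.
Import Order.TTheory GRing.Theory Num.Theory.
Local Open Scope ring_scope.

Section S.
Variable C : numClosedFieldType.

Definition ent p q (M : 'M[C]_(p,q)) (i j : nat) : C :=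
  oapp (fun i' : 'I_p => oapp (fun j' : 'I_q => M i' j') 0 (insub j)) 0 (insub i).

Lemma entE p q (M : 'M[C]_(p,q)) (i : 'I_p) (j : 'I_q) : ent M i j = M i j.
Proof. by rewrite /ent !valK. Qed.

Lemma ent_oobl p q (M : 'M[C]_(p,q)) i j : ~~ (i < p)%N -> ent M i j = 0.
Proof. by move=> h; rewrite /ent (@insubF _ _ 'I_p i (negbTE h)). Qed.

Lemma ent_oobr p q (M : 'M[C]_(p,q)) i j : ~~ (j < q)%N -> ent M i j = 0.
Proof.
move=> h; rewrite /ent (@insubF _ _ 'I_q j (negbTE h)); by case: (insub i).
Qed.

Lemma ent_matrix p q (E : nat -> nat -> C) i j :
  ent (\matrix_(i < p, j < q) E i j) i j = if (i < p)%N && (j < q)%N then E i j else 0.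
Proof.
case: (ltnP i p) => hi; last by rewrite ent_oobl // -leqNgt.
case: (ltnP j q) => hj; last by rewrite ent_oobr // -leqNgt.
by rewrite (entE _ (Ordinal hi) (Ordinal hj)) mxE.
Qed.

Lemma ent_scalar p (a : C) i j :
  ent (a%:M : 'M[C]_p) i j = if (i < p)%N && (j < p)%N && (i == j) then a else 0.
Proof.
case: (ltnP i p) => hi; last by rewrite ent_oobl // -leqNgt.
case: (ltnP j p) => hj; last by rewrite ent_oobr // -leqNgt.
rewrite (entE _ (Ordinal hi) (Ordinal hj)) mxE /=.
by change (a *+ (i == j) = (if i == j then a else 0)); case: (i == j).
Qed.

Lemma ent_mul p q r (A : 'M[C]_(p,q)) (B : 'M[C]_(q,r)) i j :
  ent (A *m B) i j = \sum_(k < q) ent A i k * ent B k j.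
Proof.
case: (ltnP i p) => hi; last by rewrite ent_oobl ?big1 // -?leqNgt // => k _; rewrite ent_oobl ?mul0r // -leqNgt.
case: (ltnP j r) => hj; last by rewrite ent_oobr ?big1 // -?leqNgt // => k _; rewrite (ent_oobr B) ?mulr0 // -leqNgt.
rewrite (entE _ (Ordinal hi) (Ordinal hj)) mxE; apply: eq_bigr => k _.
by rewrite -(entE A (Ordinal hi) k) -(entE B k (Ordinal hj)).
Qed.

Lemma expn2_gt0 k : (0 < 2 ^ k)%N.
Proof. by rewrite expn_gt0. Qed.

Lemma ent_kron n1 m1 n2 m2 (A : 'M[C]_(2 ^ m1, 2 ^ n1)) (B : 'M[C]_(2 ^ m2, 2 ^ n2)) i j :
  ent (kron A B) i j =
  ent A (i %/ 2 ^ m2) (j %/ 2 ^ n2) * ent B (i %% 2 ^ m2) (j %% 2 ^ n2).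
Proof.
have hm := expn2_gt0 m2; have hn := expn2_gt0 n2.
case: (ltnP i (2 ^ (m1 + m2))) => hi; last first.
  rewrite ent_oobl ?(ent_oobl A) ?mul0r //; first by rewrite -leqNgt leq_divRL // -expnD.
  by rewrite -leqNgt.
case: (ltnP j (2 ^ (n1 + n2))) => hj; last first.
  rewrite ent_oobr ?(ent_oobr A) ?mul0r //; first by rewrite -leqNgt leq_divRL // -expnD.
  by rewrite -leqNgt.
rewrite (entE _ (Ordinal hi) (Ordinal hj)) /kron castmxE mxE /=.
have hi1 : (i %/ 2 ^ m2 < 2 ^ m1)%N by rewrite ltn_divLR // -expnD.
have hj1 : (j %/ 2 ^ n2 < 2 ^ n1)%N by rewrite ltn_divLR // -expnD.
have hi2 : (i %% 2 ^ m2 < 2 ^ m2)%N by rewrite ltn_mod.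
have hj2 : (j %% 2 ^ n2 < 2 ^ n2)%N by rewrite ltn_mod.
by rewrite -!entE.
Qed.

End S.


Record zw := ZW { zk : nat; z0 : Z; z1 : Z; z2 : Z; z3 : Z }.

Fixpoint p2 (e : nat) : Z := match e with O => Zpos xH | S e => Z.mul (Zpos (xO xH)) (p2 e) end.

Definition scalez (e : nat) (x : zw) : zw :=
  ZW (zk x + e) (Z.mul (z0 x) (p2 e)) (Z.mul (z1 x) (p2 e)) (Z.mul (z2 x) (p2 e)) (Z.mul (z3 x) (p2 e)).
Definition addz (x y : zw) : zw :=
  let k := maxn (zk x) (zk y) in
  let x' := scalez (k - zk x) x in let y' := scalez (k - zk y) y in
  ZW k (Z.add (z0 x') (z0 y')) (Z.add (z1 x') (z1 y')) (Z.add (z2 x') (z2 y')) (Z.add (z3 x') (z3 y')).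
Definition mulz (x y : zw) : zw :=
  let: ZW k a0 a1 a2 a3 := x in let: ZW l b0 b1 b2 b3 := y in
  ZW (k + l)
    (Z.sub (Z.sub (Z.sub (Z.mul a0 b0) (Z.mul a1 b3)) (Z.mul a2 b2)) (Z.mul a3 b1))
    (Z.sub (Z.sub (Z.add (Z.mul a0 b1) (Z.mul a1 b0)) (Z.mul a2 b3)) (Z.mul a3 b2))
    (Z.sub (Z.add (Z.add (Z.mul a0 b2) (Z.mul a1 b1)) (Z.mul a2 b0)) (Z.mul a3 b3))
    (Z.add (Z.add (Z.add (Z.mul a0 b3) (Z.mul a1 b2)) (Z.mul a2 b1)) (Z.mul a3 b0)).
Definition zerz := ZW 0 Z0 Z0 Z0 Z0.
Definition onez := ZW 0 (Zpos xH) Z0 Z0 Z0.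
Definition boolz (b : bool) := if b then onez else zerz.
Definition hz := ZW 1 Z0 (Zpos xH) Z0 (Zneg xH).
Definition wz := ZW 0 Z0 (Zpos xH) Z0 Z0.
Definition negz := ZW 0 (Zneg xH) Z0 Z0 Z0.
Definition wpow (k : nat) := iter k (mulz wz) onez.
Definition sumz (s : seq zw) := foldr addz zerz s.
Definition eqz (x y : zw) : bool :=
  [&& Z.eqb (Z.mul (z0 x) (p2 (zk y))) (Z.mul (z0 y) (p2 (zk x))),
      Z.eqb (Z.mul (z1 x) (p2 (zk y))) (Z.mul (z1 y) (p2 (zk x))),
      Z.eqb (Z.mul (z2 x) (p2 (zk y))) (Z.mul (z2 y) (p2 (zk x))) &
      Z.eqb (Z.mul (z3 x) (p2 (zk y))) (Z.mul (z3 y) (p2 (zk x)))].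

Definition tab (r c : nat) (f : nat -> nat -> zw) : seq (seq zw) :=
  [seq [seq f i j | j <- iota 0 c] | i <- iota 0 r].
Definition get (t : seq (seq zw)) (i j : nat) : zw := nth zerz (nth [::] t i) j.
Lemma get_tab r c f i j : (i < r)%N -> (j < c)%N -> get (tab r c f) i j = f i j.
Proof.
move=> hi hj; rewrite /get /tab (nth_map 0%N) ?size_iota // nth_iota //.
by rewrite (nth_map 0%N) ?size_iota // nth_iota.
Qed.
Lemma get_tab_oob r c f i j : ~~ ((i < r)%N && (j < c)%N) -> get (tab r c f) i j = zerz.
Proof.
rewrite /get /tab negb_and => /orP[] h.
  rewrite (nth_default [::]) ?nth_nil //.
  by rewrite size_map size_iota leqNgt.
case: (ltnP i r) => hi; last first.
  by rewrite (nth_default [::]) ?nth_nil // size_map size_iota.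
rewrite (nth_map 0%N) ?size_iota // nth_default //.
by rewrite size_map size_iota leqNgt.
Qed.

Fixpoint ev n m (D : diagram n m) {struct D} : nat -> nat -> zw :=
  match D with
  | ZSpider n m => fun i j => if (i < 2 ^ m)%N && (j < 2 ^ n)%N then
       addz (boolz ((i == 0%N) && (j == 0%N))) (boolz ((i == (2 ^ m).-1) && (j == (2 ^ n).-1)))
       else zerz
  | ZPhase k => fun i j => if (i < 2)%N && (j < 2)%N then
       (if i == j then (if i == 0%N then onez else wpow k) else zerz) else zerz
  | Had => fun i j => if (i < 2)%N && (j < 2)%N then
       (if (i * j == 1)%N then mulz negz hz else hz) else zerz
  | Swap => fun i j => if (i < 4)%N && (j < 4)%N then
       boolz (i == 2 * (j %% 2) + j %/ 2)%N else zerz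
  | IdW => fun i j => boolz [&& (i < 2)%N, (j < 2)%N & i == j]
  | Empty => fun i j => boolz [&& (i < 1)%N, (j < 1)%N & i == j]
  | Cap => fun i j => if (i < 4)%N && (j < 1)%N then boolz ((i == 0%N) || (i == 3%N)) else zerz
  | Cup => fun i j => if (i < 1)%N && (j < 4)%N then boolz ((j == 0%N) || (j == 3%N)) else zerz
  | Comp n k m D1 D2 =>
       let tA := tab (2 ^ m) (2 ^ k) (ev D1) in
       let tB := tab (2 ^ k) (2 ^ n) (ev D2) in
       fun (i j : nat) => sumz [seq mulz (get tA i K) (get tB K j) | K <- iota 0 (2 ^ k)]
  | Tens n1 m1 n2 m2 D1 D2 =>
       let f1 := ev D1 in let f2 := ev D2 in
       fun (i j : nat) => mulz (f1 (i %/ 2 ^ m2)%N (j %/ 2 ^ n2)%N) (f2 (i %% 2 ^ m2)%N (j %% 2 ^ n2)%N)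
  end.

Definition chk n m (D : diagram n m) (f : nat -> nat -> zw) : bool :=
  let e := ev D in
  all (fun i => all (fun j => eqz (e i j) (f i j)) (iota 0 (2 ^ n))) (iota 0 (2 ^ m)).

Section Phi.
Variable C : numClosedFieldType.
Definition phiZ (z : Z) : C := (int_of_Z z)%:~R.
Definition w : C := omega8 C.
Definition phi (x : zw) : C :=
  (phiZ (z0 x) + phiZ (z1 x) * w + phiZ (z2 x) * w ^+ 2 + phiZ (z3 x) * w ^+ 3)
  / 2%:R ^+ zk x.

Lemma phiZD a b : phiZ (Z.add a b) = phiZ a + phiZ b.
Proof. by rewrite /phiZ -intrD -rmorphD. Qed.
Lemma phiZM a b : phiZ (Z.mul a b) = phiZ a * phiZ b.
Proof. by rewrite /phiZ -intrM -rmorphM. Qed.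
Lemma phiZN a : phiZ (Z.opp a) = - phiZ a.
Proof. by rewrite /phiZ -intrN -rmorphN. Qed.
Lemma phiZB a b : phiZ (Z.sub a b) = phiZ a - phiZ b.
Proof. by rewrite /phiZ -intrB -rmorphB. Qed.
Lemma phiZ0 : phiZ Z0 = 0. Proof. by []. Qed.
Lemma phiZ1 : phiZ (Zpos xH) = 1. Proof. by []. Qed.
Lemma phiZp2 e : phiZ (p2 e) = 2%:R ^+ e.
Proof.
elim: e => [|e IH]; first by [].
have -> : p2 e.+1 = Z.mul (Zpos (xO xH)) (p2 e) by [].
rewrite phiZM IH exprS; congr (_ * _).
Qed.

Definition nz (x : zw) : C :=
  phiZ (z0 x) + phiZ (z1 x) * w + phiZ (z2 x) * w ^+ 2 + phiZ (z3 x) * w ^+ 3.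
Lemma phiE x : phi x = nz x / 2%:R ^+ zk x. Proof. by []. Qed.

Lemma two_neq0 : (2%:R : C) != 0. Proof. by rewrite pnatr_eq0. Qed.
Lemma p2_neq0 k : (2%:R ^+ k : C) != 0. Proof. by rewrite expf_neq0 // two_neq0. Qed.
Definition s2 : C := sqrtC 2%:R.
Lemma s2_sq : s2 ^+ 2 = 2%:R. Proof. by rewrite /s2 sqrtCK. Qed.
Lemma s2_neq0 : s2 != 0. Proof. by rewrite /s2 sqrtC_eq0 two_neq0. Qed.
Lemma w2 : w ^+ 2 = 'i.
Proof.
rewrite /w /omega8 expr_div_n.
have -> : sqrtC (2 : C) ^+ 2 = 2%:R by rewrite sqrtCK.
by rewrite sqrrD sqrCi expr1n mul1r; field.
Qed.
Lemma w4 : w ^+ 4 = -1.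
Proof. by rewrite (exprM w 2 2) w2 sqrCi. Qed.
Lemma w_w3 : w - w ^+ 3 = s2.
Proof.
have -> : w ^+ 3 = w * 'i by rewrite exprS w2.
have e : w - w * 'i = (1 + 'i) * (1 - 'i) / s2 by rewrite /w /omega8 /s2; field; exact: s2_neq0.
rewrite e.
have -> : (1 + 'i) * (1 - 'i) = (2%:R : C).
  by rewrite mulrDl mul1r mulrBr mulr1 -expr2 sqrCi; ring.
have := s2_sq; move: s2_neq0; set t := s2 => ht h2; rewrite -h2; field => //.
Qed.

Lemma nz_mul x y : nz (mulz x y) = nz x * nz y.
Proof.
case: x => k a0 a1 a2 a3; case: y => l b0 b1 b2 b3.
rewrite /nz /= !phiZB !phiZD !phiZM.
set A0 := phiZ a0; set A1 := phiZ a1; set A2 := phiZ a2; set A3 := phiZ a3.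
set B0 := phiZ b0; set B1 := phiZ b1; set B2 := phiZ b2; set B3 := phiZ b3.
apply/eqP; rewrite -subr_eq0; apply/eqP.
have -> : A0 * B0 - A1 * B3 - A2 * B2 - A3 * B1 + (A0 * B1 + A1 * B0 - A2 * B3 - A3 * B2) * w +
  (A0 * B2 + A1 * B1 + A2 * B0 - A3 * B3) * w ^+ 2 + (A0 * B3 + A1 * B2 + A2 * B1 + A3 * B0) * w ^+ 3 -
  (A0 + A1 * w + A2 * w ^+ 2 + A3 * w ^+ 3) * (B0 + B1 * w + B2 * w ^+ 2 + B3 * w ^+ 3)
  = - (w ^+ 4 + 1) * ((A1 * B3 + A2 * B2 + A3 * B1) + (A2 * B3 + A3 * B2) * w + A3 * B3 * w ^+ 2)
  by ring.
by rewrite w4 addNr oppr0 mul0r.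
Qed.

Lemma phi_mul x y : phi (mulz x y) = phi x * phi y.
Proof.
rewrite !phiE nz_mul mulf_div -exprD; congr (_ / _ ^+ _).
by case: x; case: y.
Qed.

Lemma nz_scale e x : nz (scalez e x) = nz x * 2%:R ^+ e.
Proof. by rewrite /nz /= !phiZM phiZp2; ring. Qed.

Lemma phi_scale e x : phi (scalez e x) = phi x.
Proof.
rewrite !phiE nz_scale /= exprD.
by rewrite [2%:R ^+ zk x * _]mulrC invfM mulrA mulfK // p2_neq0.
Qed.

Lemma phi_add x y : phi (addz x y) = phi x + phi y.
Proof.
rewrite -(phi_scale (maxn (zk x) (zk y) - zk x) x) -(phi_scale (maxn (zk x) (zk y) - zk y) y).
rewrite !phiE.
have ex : zk (scalez (maxn (zk x) (zk y) - zk x) x) = maxn (zk x) (zk y).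
  by rewrite /= subnKC // leq_maxl.
have ey : zk (scalez (maxn (zk x) (zk y) - zk y) y) = maxn (zk x) (zk y).
  by rewrite /= subnKC // leq_maxr.
rewrite ex ey -mulrDl; congr (_ / _).
by rewrite /addz /nz /= !phiZD; ring.
Qed.

Lemma phi_zer : phi zerz = 0.
Proof. by rewrite phiE /nz /= !phiZ0 !mul0r !addr0 mul0r. Qed.
Lemma phi_one : phi onez = 1.
Proof. by rewrite phiE /nz /= phiZ0 phiZ1 !mul0r !addr0 expr0 divr1. Qed.
Lemma phi_bool b : phi (boolz b) = b%:R.
Proof. by case: b; rewrite /= ?phi_one ?phi_zer. Qed.
Lemma phi_wz : phi wz = w.
Proof. by rewrite phiE /nz /= phiZ0 phiZ1 !mul0r mul1r add0r !addr0 expr0 divr1. Qed.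
Lemma phi_wpow k : phi (wpow k) = w ^+ k.
Proof.
elim: k => [|k IH]; first by rewrite /wpow /= phi_one.
by rewrite /wpow iterS phi_mul phi_wz -/(wpow k) IH exprS.
Qed.
Lemma phi_neg : phi negz = -1.
Proof. by rewrite phiE /nz /=; rewrite /phiZ /=; rewrite !mul0r !addr0 expr0 divr1. Qed.
Lemma phi_hz : phi hz = s2^-1.
Proof.
rewrite phiE /nz /= phiZ0 phiZ1.
have -> : phiZ (Zneg xH) = -1 by [].
have -> : 0 + 1 * w + 0 * w ^+ 2 + -1 * w ^+ 3 = w - w ^+ 3 by ring.
rewrite w_w3 expr1.
have := s2_sq; move: s2_neq0; set t := s2 => ht h2; rewrite -h2; field => //.
Qed.
Lemma phi_sum s : phi (sumz s) = \sum_(x <- s) phi x.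
Proof.
elim: s => [|x s IH]; first by rewrite big_nil phi_zer.
by rewrite big_cons /= phi_add IH.
Qed.

Lemma eqz_sound x y : eqz x y -> phi x = phi y.
Proof.
case/and4P => /Z.eqb_eq h0 /Z.eqb_eq h1 /Z.eqb_eq h2 /Z.eqb_eq h3.
have e : nz x * 2%:R ^+ zk y = nz y * 2%:R ^+ zk x.
  move: (congr1 phiZ h0) (congr1 phiZ h1) (congr1 phiZ h2) (congr1 phiZ h3).
  rewrite !phiZM !phiZp2 /nz.
  set P := 2%:R ^+ zk y; set Q := 2%:R ^+ zk x => e0 e1 e2 e3.
  transitivity (phiZ (z0 x) * P + (phiZ (z1 x) * P) * w + (phiZ (z2 x) * P) * w ^+ 2 + (phiZ (z3 x) * P) * w ^+ 3).
    by ring.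
  by rewrite e0 e1 e2 e3; ring.
rewrite !phiE; apply/eqP; rewrite eqr_div ?p2_neq0 //; apply/eqP.
by rewrite e.
Qed.
End Phi.



Section Sem.
Variable C : numClosedFieldType.
Definition sem n m (D : diagram n m) := ent (interp C D).

Lemma sem_comp n k m (D1 : diagram k m) (D2 : diagram n k) i j :
  sem (Comp D1 D2) i j = \sum_(K < 2 ^ k) sem D1 i K * sem D2 K j.
Proof. by rewrite /sem /= ent_mul. Qed.

Lemma sem_tens n1 m1 n2 m2 (D1 : diagram n1 m1) (D2 : diagram n2 m2) i j :
  sem (Tens D1 D2) i j =
  sem D1 (i %/ 2 ^ m2) (j %/ 2 ^ n2) * sem D2 (i %% 2 ^ m2) (j %% 2 ^ n2).
Proof. by rewrite /sem /= ent_kron. Qed.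

Lemma ent_mx p q (F : 'I_p -> 'I_q -> C) i j X :
  (forall (a : 'I_p) (b : 'I_q), nat_of_ord a = i -> nat_of_ord b = j -> F a b = X) ->
  (~~ ((i < p)%N && (j < q)%N) -> X = 0) -> ent (\matrix_(a, b) F a b) i j = X.
Proof.
move=> h1 h2; case: (ltnP i p) => hi; last first.
  have hn : ~~ (i < p)%N by rewrite -leqNgt.
  by rewrite ent_oobl // h2 // (negbTE hn).
case: (ltnP j q) => hj; last first.
  have hn : ~~ (j < q)%N by rewrite -leqNgt.
  by rewrite ent_oobr // h2 // (negbTE hn) andbF.
by rewrite (entE _ (Ordinal hi) (Ordinal hj)) mxE; apply: h1.
Qed.

Lemma sem_oob n m (D : diagram n m) i j : ~~ ((i < 2 ^ m)%N && (j < 2 ^ n)%N) -> sem D i j = 0.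
Proof.
rewrite negb_and => /orP[] h; first by rewrite /sem ent_oobl.
by rewrite /sem ent_oobr.
Qed.

Lemma phi_get n m (D : diagram n m) (IH : forall i j, sem D i j = phi C (ev D i j)) i j :
  phi C (get (tab (2 ^ m) (2 ^ n) (ev D)) i j) = sem D i j.
Proof.
case h: ((i < 2 ^ m)%N && (j < 2 ^ n)%N).
  by move/andP: h => [hi hj]; rewrite get_tab.
by rewrite get_tab_oob ?h // phi_zer sem_oob ?h.
Qed.

Lemma ev_sound n m (D : diagram n m) i j : sem D i j = phi C (ev D i j).
Proof.
elim: D i j => [n' m'|k||||||| n' k m' D1 IH1 D2 IH2 | n1 m1 n2 m2 D1 IH1 D2 IH2] i j.
- rewrite /sem /=; apply: ent_mx => [a b <- <-|/negbTE ->]; last by rewrite phi_zer.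
  by rewrite !ltn_ord /= phi_add !phi_bool.
- rewrite /sem /=; apply: ent_mx => [a b <- <-|/negbTE ->]; last by rewrite phi_zer.
  rewrite !ltn_ord /=.
  case: ifP => _; last by rewrite phi_zer.
  by case: ifP => _; rewrite ?phi_one ?phi_wpow.
- rewrite /sem /=; apply: ent_mx => [a b <- <-|/negbTE ->]; last by rewrite phi_zer.
  rewrite !ltn_ord /=.
  have -> : (-1) ^+ (a * b) = (if (a * b == 1)%N then -1 else 1 : C).
    by case: a b => [[|[|a]] ha] [[|[|b]] hb].
  case: ifP => _; first by change ((sqrtC 2 : C)^-1 * -1 = phi C (mulz negz hz)); rewrite phi_mul phi_neg phi_hz mulN1r mulrN1.
  by rewrite phi_hz mulr1.
- rewrite /sem /=; apply: ent_mx => [a b <- <-|/negbTE ->]; last by rewrite phi_zer.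
  by rewrite !ltn_ord /= phi_bool.
- by rewrite /sem /= ent_scalar phi_bool andbA; case: ifP.
- by rewrite /sem /= ent_scalar phi_bool andbA; case: ifP.
- rewrite /sem /=; apply: ent_mx => [a b <- <-|/negbTE ->]; last by rewrite phi_zer.
  by rewrite !ltn_ord /= phi_bool.
- rewrite /sem /=; apply: ent_mx => [a b <- <-|/negbTE ->]; last by rewrite phi_zer.
  by rewrite !ltn_ord /= phi_bool.
- rewrite sem_comp /= phi_sum big_map -(big_mkord xpredT (fun K : nat => sem D1 i K * sem D2 K j)) /index_iota subn0.
  by apply: eq_bigr => K _; rewrite phi_mul !phi_get.
- by rewrite sem_tens /= IH1 IH2 phi_mul.
Qed.

Lemma chk_sound n m (D : diagram n m) f :
  chk D f -> forall i j, (i < 2 ^ m)%N -> (j < 2 ^ n)%N -> sem D i j = phi C (f i j).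
Proof.
move=> /allP h i j hi hj; rewrite ev_sound; apply: eqz_sound.
have hi' : i \in iota 0 (2 ^ m) by rewrite mem_iota.
have hj' : j \in iota 0 (2 ^ n) by rewrite mem_iota.
by move: (h i hi') => /allP /(_ j hj').
Qed.

Definition castD n m m' (e : m = m') (D : diagram n m) : diagram n m' :=
  eq_rect m (diagram n) D m' e.
Lemma sem_castD n m m' (e : m = m') (D : diagram n m) : sem (castD e D) = sem D.
Proof. by case: m' / e. Qed.
Definition castDi n n' m (e : n = n') (D : diagram n m) : diagram n' m :=
  eq_rect n (fun x => diagram x m) D n' e.
Lemma sem_castDi n n' m (e : n = n') (D : diagram n m) : sem (castDi e D) = sem D.
Proof. by case: n' / e. Qed.
End Sem.


Notation ph k := (ZPhase (@Ordinal 8 k isT)).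
Definition sInv : diagram 0 0 :=
  Comp Cup (Comp (Tens Had IdW) (Comp (ZSpider 1 2) (Comp (ph 3) (Comp Had (Comp (ph 1) (ZSpider 0 1)))))).
Definition sSqrt2 : diagram 0 0 := Comp (ZSpider 1 0) (Comp Had (ZSpider 0 1)).
Definition sTwo : diagram 0 0 := ZSpider 0 0.
Definition sW7 : diagram 0 0 := Comp Cup (Comp (Tens (Comp Had (ph 2)) IdW) Cap).
Definition Xg : diagram 1 1 := Comp Had (Comp (ph 4) Had).
Definition XORp : diagram 2 1 := Comp Had (Comp (ZSpider 2 1) (Tens Had Had)).
Definition CNOTd : diagram 2 2 := Comp (Tens IdW XORp) (Tens (ZSpider 1 2) IdW).
Definition CNOTu : diagram 2 2 := Comp (Tens XORp IdW) (Tens IdW (ZSpider 1 2)).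
Definition onU (D : diagram 1 1) : diagram 3 3 := Tens IdW (Tens D IdW).
Definition top2 (D : diagram 2 2) : diagram 3 3 := Tens D IdW.
Definition bot2 (D : diagram 2 2) : diagram 3 3 := Tens IdW D.
Fixpoint seqD n (l : seq (diagram n n)) (d : diagram n n) : diagram n n :=
  match l with [::] => d | D :: l' => Comp D (seqD l' d) end.
Definition CCZ8 : diagram 3 3 :=
  seqD [:: bot2 Swap; top2 CNOTd; onU (ph 7); top2 CNOTd; bot2 Swap;
          bot2 CNOTu; onU (ph 7); top2 CNOTd; onU (ph 1); bot2 CNOTu; onU (ph 7); top2 CNOTd]
       (Tens (ph 1) (Tens (ph 1) (ph 1))).

Definition Plus : diagram 0 1 := ZSpider 0 1.
Definition Disc : diagram 1 0 := ZSpider 1 0.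
Definition s4r2 : diagram 0 0 := Tens sTwo (Tens sTwo sSqrt2).
Definition ANDT : diagram 1 2 :=
  Tens s4r2 (Comp (Tens Disc (Tens IdW IdW)) (Comp CCZ8 (Tens Had (Tens Plus Plus)))).
Definition Wdag : diagram 2 1 :=
  Tens s4r2 (Comp XORp (Comp (Tens Disc (Tens IdW IdW)) (Comp CCZ8 (Tens Plus (Tens IdW IdW))))).
Definition Tp1 : diagram 2 2 := Comp (Tens (ZSpider 2 1) IdW) (Comp (Tens IdW Swap) (Tens ANDT IdW)).
Definition Tp0 : diagram 2 2 := Comp (Tens Xg IdW) (Comp Tp1 (Tens IdW Xg)).
Definition T0 : diagram 1 0 := Tens sInv (Comp Disc (Comp Had Xg)).
Definition Leaf : diagram 0 1 := Comp Had (Comp (ph 1) Plus).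
Definition Enc12 : diagram 0 1 :=
  Tens sInv (Tens sW7 (Comp Had (Comp (ph 4) (Comp (ZSpider 2 1) (Tens Leaf Leaf))))).

Definition mz (x : Z) := ZW 0 x Z0 Z0 Z0.
Lemma CCZ8_chk : chk CCZ8 (fun i j => if i == j then (if i == 7%N then ZW 3 (Zneg xH) Z0 Z0 Z0 else ZW 3 (Zpos xH) Z0 Z0 Z0) else zerz).
Proof. by vm_compute. Qed.
Lemma ANDT_chk : chk ANDT (fun i j => boolz (j == (i == 3%N))).
Proof. by vm_compute. Qed.
Lemma Wdag_chk : chk Wdag (fun i j => boolz (if i == 0%N then j == 0%N else (j == 1%N) || (j == 2%N))).
Proof. by vm_compute. Qed.
Lemma Tp1_chk : chk Tp1 (fun i j => boolz ((i %/ 2 == j %% 2) && (j %/ 2 == (j %% 2 == 1) && (i %% 2 == 1)))%N).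
Proof. by vm_compute. Qed.
Lemma Tp0_chk : chk Tp0 (fun i j => boolz ((i %/ 2 == j %% 2) && (j %/ 2 == (j %% 2 == 0) && (i %% 2 == 1)))%N).
Proof. by vm_compute. Qed.
Lemma T0_chk : chk T0 (fun i j => boolz (j == 1%N)).
Proof. by vm_compute. Qed.
Lemma Enc12_chk : chk Enc12 (fun i j => if i == 0%N then onez else hz).
Proof. by vm_compute. Qed.


Section G.
Variable C : numClosedFieldType.
Notation sem := (@sem C).

Lemma sem_tensD n1 m1 n2 m2 (D1 : diagram n1 m1) (D2 : diagram n2 m2) a b c e :
  (b < 2 ^ m2)%N -> (e < 2 ^ n2)%N ->
  sem (Tens D1 D2) (a * 2 ^ m2 + b) (c * 2 ^ n2 + e) = sem D1 a c * sem D2 b e.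
Proof.
move=> hb he; rewrite sem_tens !divnMDl ?expn2_gt0 // !divn_small // !addn0.
by rewrite !modnMDl !modn_small.
Qed.

Lemma sum_split_nat (p d : nat) (F : nat -> C) :
  \sum_(0 <= K < p * d) F K = \sum_(0 <= i < p) \sum_(0 <= q < d) F (i * d + q)%N.
Proof.
elim: p => [|p IH]; first by rewrite mul0n !big_geq.
rewrite big_nat_recr //= -IH mulSn addnC (@big_cat_nat _ _ _ (p * d)) ?leq_addr //=.
congr (_ + _).
rewrite -{1}(add0n (p * d)%N) big_addn addKn.
by apply: eq_bigr => q _; rewrite addnC.
Qed.

Lemma sum_split k1 k2 (F : nat -> C) :
  \sum_(K < 2 ^ (k1 + k2)) F K = \sum_(p < 2 ^ k1) \sum_(q < 2 ^ k2) F (p * 2 ^ k2 + q)%N.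
Proof.
rewrite -(big_mkord xpredT (fun K : nat => F K)) expnD sum_split_nat.
rewrite -(big_mkord xpredT (fun p : nat => \sum_(q < 2 ^ k2) F (p * 2 ^ k2 + q)%N)).
by apply: eq_bigr => p _; rewrite -(big_mkord xpredT (fun q : nat => F (p * 2 ^ k2 + q)%N)).
Qed.

Lemma sum_splitE k k1 k2 (F : nat -> C) : k = (k1 + k2)%N ->
  \sum_(0 <= K < 2 ^ k) F K = \sum_(0 <= p < 2 ^ k1) \sum_(0 <= q < 2 ^ k2) F (p * 2 ^ k2 + q)%N.
Proof. by move=> ->; rewrite expnD sum_split_nat. Qed.

Lemma sem_compN n k m (D1 : diagram k m) (D2 : diagram n k) i j :
  sem (Comp D1 D2) i j = \sum_(0 <= K < 2 ^ k) sem D1 i K * sem D2 K j.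
Proof. by rewrite sem_comp big_mkord. Qed.

Lemma sum2N (F : nat -> C) : \sum_(0 <= q < 2) F q = F 0%N + F 1%N.
Proof. by rewrite big_mkord big_ord_recr /= big_ord1. Qed.

Lemma sum_bool_deltaN N a (B : nat -> bool) :
  (a < N)%N -> (forall q, B q -> q = a) -> \sum_(0 <= q < N) (B q)%:R = (B a)%:R :> C.
Proof.
move=> ha hB; rewrite big_mkord (bigD1 (Ordinal ha)) //= big1 ?addr0 // => q hq.
case hb: (B q); last by [].
by move: hq; have := hB _ hb => e; rewrite (_ : q = Ordinal ha) ?eqxx //; apply: val_inj.
Qed.

Lemma sum_delta N a (F : nat -> C) :
  (a < N)%N -> \sum_(q < N) ((q : nat) == a)%:R * F q = F a.
Proof.
move=> ha; rewrite (bigD1 (Ordinal ha)) //= eqxx mul1r big1 ?addr0 // => q hq.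
have -> : ((q : nat) == a) = false.
  by apply/negbTE; apply: contra hq => /eqP e; apply/eqP/val_inj.
by rewrite mul0r.
Qed.

Lemma sum2 (F : nat -> C) : \sum_(q < 2) F q = F 0%N + F 1%N.
Proof. by rewrite big_ord_recr /= big_ord1. Qed.

Lemma boolR_mul (b1 b2 : bool) : (b1%:R * b2%:R : C) = (b1 && b2)%:R.
Proof. by case: b1; case: b2; rewrite ?mul1r ?mul0r. Qed.

Fixpoint idd k : diagram k k :=
  match k with O => Empty | k'.+1 => Tens IdW (idd k') end.

Lemma sem_IdW i j : sem IdW i j = [&& (i < 2)%N, (j < 2)%N & i == j]%:R.
Proof. by rewrite ev_sound phi_bool. Qed.

Lemma sem_idd k i j : (i < 2 ^ k)%N -> (j < 2 ^ k)%N -> sem (idd k) i j = (i == j)%:R.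
Proof.
elim: k i j => [|k IH] i j hi hj.
  by rewrite /= ev_sound phi_bool /= hi hj.
change (sem (Tens IdW (idd k)) i j = (i == j)%:R).
rewrite (divn_eq i (2 ^ k)) (divn_eq j (2 ^ k)).
have hk := expn2_gt0 k.
rewrite sem_tensD ?ltn_mod // IH ?ltn_mod // sem_IdW.
have hi1 : (i %/ 2 ^ k < 2)%N by rewrite ltn_divLR // -expnS.
have hj1 : (j %/ 2 ^ k < 2)%N by rewrite ltn_divLR // -expnS.
rewrite hi1 hj1 boolR_mul /=; congr ((nat_of_bool _) %:R).
rewrite -!divn_eq; apply/idP/eqP => [/andP[/eqP e1 /eqP e2]|->]; last by rewrite !eqxx.
by rewrite (divn_eq i (2 ^ k)) e1 e2 -divn_eq.
Qed.


Lemma eq_digits d a b r t : (r < d)%N -> (t < d)%N -> (a * d + r == b * d + t)%N = (a == b) && (r == t).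
Proof.
move=> hr ht; apply/eqP/andP => [e|[/eqP -> /eqP ->] //].
have hd : (0 < d)%N by apply: leq_ltn_trans hr.
have e1 : a = b.
  by move: (congr1 (fun x => x %/ d)%N e); rewrite !divnMDl // !divn_small // !addn0.
by split; apply/eqP => //; move: e; rewrite e1 => /addnI.
Qed.

Definition Tp (b : nat) : diagram 2 2 := if b == 1%N then Tp1 else Tp0.

Lemma sem_Tp b a v s x : (b < 2)%N -> (a < 2)%N -> (v < 2)%N -> (s < 2)%N -> (x < 2)%N ->
  sem (Tp b) (a * 2 + v) (s * 2 + x) = ((a == x) && (s == ((x == b) && (v == 1%N))))%:R.
Proof.
case: b => [|[|//]] _; case: a => [|[|//]] _; case: v => [|[|//]] _;
  case: s => [|[|//]] _; case: x => [|[|//]] _.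
all: by rewrite /Tp /= (chk_sound C Tp1_chk, chk_sound C Tp0_chk) //= ?phi_one ?phi_zer.
Qed.

Lemma sem_T0 j : (j < 2)%N -> sem T0 0 j = (j == 1%N)%:R.
Proof. by case: j => [|[|//]] _; rewrite (chk_sound C T0_chk) //= ?phi_one ?phi_zer. Qed.

Fixpoint Tk (k z : nat) {struct k} : diagram k.+1 k :=
  match k with
  | O => T0
  | k'.+1 => Comp (Tens IdW (Tk k' (z %% 2 ^ k'))) (Tens (Tp (z %/ 2 ^ k')) (idd k'))
  end.


Lemma sum_bool_delta N a (B : nat -> bool) :
  (a < N)%N -> (forall q, B q -> q = a) -> \sum_(q < N) (B q)%:R = (B a)%:R :> C.
Proof.
move=> ha hB; rewrite (bigD1 (Ordinal ha)) //= big1 ?addr0 // => q hq.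
case hb: (B q); last by [].
by move: hq; have := hB _ hb => e; rewrite (_ : q = Ordinal ha) ?eqxx //; apply: val_inj.
Qed.

Lemma digits k x : (x < 2 ^ k.+1)%N -> exists xa xr, [/\ x = (xa * 2 ^ k + xr)%N, (xa < 2)%N & (xr < 2 ^ k)%N].
Proof.
move=> hx; exists (x %/ 2 ^ k)%N, (x %% 2 ^ k)%N; split; first exact: divn_eq.
  by rewrite ltn_divLR ?expn2_gt0 // -expnS.
by rewrite ltn_mod expn2_gt0.
Qed.

Lemma digit_lt k a b : (a < 2)%N -> (b < 2 ^ k)%N -> (a * 2 ^ k + b < 2 ^ k.+1)%N.
Proof. by move=> ha hb; rewrite expnS; case: a ha => [|[|//]] _; rewrite ?mul0n ?mul1n ?add0n; lia. Qed.

Lemma sem_Tk k z x s x' : (z < 2 ^ k)%N -> (x < 2 ^ k)%N -> (x' < 2 ^ k)%N -> (s < 2)%N ->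
  sem (Tk k z) x (s * 2 ^ k + x') = ((x == x') && (s == (x == z)))%:R.
Proof.
elim: k z x s x' => [|k IH] z x s x' hz hx hx' hs.
  move: hz hx hx'; rewrite expn0 !ltnS !leqn0 => /eqP -> /eqP -> /eqP ->.
  by rewrite muln1 addn0 /= sem_T0.
have hd := expn2_gt0 k.
case: (digits hz) => zb [zr [-> hzb hzr]].
case: (digits hx) => xa [xr [-> hxa hxr]].
case: (digits hx') => ja [jr [-> hja hjr]].
rewrite !eq_digits //.
rewrite [Tk _ _]/= modnMDl modn_small // divnMDl // divn_small // addn0.
rewrite sem_compN (@sum_splitE (2 + k) 1 (1 + k)) // expn1 sum2N.
rewrite !(@sum_splitE (1 + k) 1 k) // !expn1 !sum2N.
have re : forall p1 p2 q, (p1 * 2 ^ (1 + k) + (p2 * 2 ^ k + q) = (p1 * 2 + p2) * 2 ^ k + q)%N.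
  by move=> p1 p2 q; rewrite expnS; ring.
have rj : (s * 2 ^ k.+1 + (ja * 2 ^ k + jr) = (s * 2 + ja) * 2 ^ k + jr)%N.
  by rewrite expnS; ring.
have Hs : forall p1 p2, (p1 < 2)%N -> (p2 < 2)%N ->
  \sum_(0 <= q < 2 ^ k) sem (Tens IdW (Tk k zr)) (xa * 2 ^ k + xr) (p1 * 2 ^ (1 + k) + (p2 * 2 ^ k + q)) *
     sem (Tens (Tp zb) (idd k)) (p1 * 2 ^ (1 + k) + (p2 * 2 ^ k + q)) (s * 2 ^ k.+1 + (ja * 2 ^ k + jr))
  = ((xa == p1) && ((xr == jr) && (p2 == (xr == zr))) && ((p1 == ja) && (s == ((ja == zb) && (p2 == 1%N)))))%:R.
  move=> p1 p2 h1 h2.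
  under eq_big_nat => q /andP[_ hq] do
    rewrite sem_tensD ?digit_lt // IH // sem_IdW hxa h1 /= re rj sem_tensD // sem_Tp // sem_idd // !boolR_mul.
  rewrite (@sum_bool_deltaN _ jr) //; first by rewrite eqxx andbT.
  by move=> q /and3P[_ _ /eqP].
rewrite !Hs //.
case: (xa) hxa => [|[|//]] _; case: (ja) hja => [|[|//]] _; case: (s) hs => [|[|//]] _;
  case: (zb) hzb => [|[|//]] _; case: (xr == jr); case: (xr == zr).
all: by rewrite /= ?add0r ?addr0.
Qed.

End G.




Lemma Plus_chk : chk Plus (fun _ _ => onez). Proof. by vm_compute. Qed.
Lemma Disc_chk : chk Disc (fun _ _ => onez). Proof. by vm_compute. Qed.
Definition iz := ZW 0 Z0 Z0 (Zpos xH) Z0.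
Lemma ph2_chk : chk (ph 2) (fun i j => if i == j then (if i == 0%N then onez else iz) else zerz).
Proof. by vm_compute. Qed.
Lemma ph4_chk : chk (ph 4) (fun i j => if i == j then (if i == 0%N then onez else negz) else zerz).
Proof. by vm_compute. Qed.
Lemma Z21_chk : chk (ZSpider 2 1) (fun i j => boolz (((i == 0%N) && (j == 0%N)) || ((i == 1%N) && (j == 3%N)))).
Proof. by vm_compute. Qed.

Section H.
Variable C : numClosedFieldType.
Notation sem := (@sem C).

Lemma sum_delta_c N a (B : nat -> bool) (c : C) : (a < N)%N ->
  \sum_(0 <= q < N) (B q)%:R * (c * (q == a)%:R) = (B a)%:R * c.
Proof.
move=> ha; rewrite big_mkord (bigD1 (Ordinal ha)) //= eqxx mulr1 big1 ?addr0 // => q hq.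
have -> : ((q : nat) == a) = false.
  by apply/negbTE; apply: contra hq => /eqP e; apply/eqP/val_inj.
by rewrite /= mulr0n !mulr0.
Qed.

Lemma phi_iz : phi C iz = 'i.
Proof. by rewrite phiE /nz /= phiZ0 phiZ1 !mul0r mul1r !add0r addr0 expr0 divr1 w2. Qed.

Definition Enc (l : C) := exists D : diagram 0 1, sem D 0 0 = 1 /\ sem D 1 0 = l.

Lemma sem_tens01 (D1 D2 : diagram 0 1) p q : (q < 2)%N ->
  sem (Tens D1 D2) (p * 2 + q) 0 = sem D1 p 0 * sem D2 q 0.
Proof. by move=> hq; rewrite -[0%N]/(0 * 2 ^ 0 + 0)%N sem_tensD. Qed.

Lemma enc_R (l : C) : in_Zi_isqrt2 l -> Enc l.
Proof.
elim => [|||x y _ [Dx [hx0 hx1]] _ [Dy [hy0 hy1]]|x _ [Dx [hx0 hx1]]|x y _ [Dx [hx0 hx1]] _ [Dy [hy0 hy1]]].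
- by exists Plus; rewrite !(chk_sound C Plus_chk) //= phi_one.
- exists (Comp (ph 2) Plus); rewrite !sem_compN !sum2N !(chk_sound C ph2_chk) //=
    !(chk_sound C Plus_chk) //= ?phi_one ?phi_zer ?phi_iz.
  by split; ring.
- by exists Enc12; rewrite !(chk_sound C Enc12_chk) //= phi_one phi_hz.
- exists (Comp Wdag (Tens Dx Dy)); rewrite !sem_compN !(@sum_splitE C 2 1 1) // !expn1 !sum2N.
  rewrite !sem_tens01 // hx0 hx1 hy0 hy1 !(chk_sound C Wdag_chk) //= ?phi_one ?phi_zer.
  by split; ring.
- exists (Comp (ph 4) Dx); rewrite !sem_compN !sum2N !(chk_sound C ph4_chk) //= hx0 hx1
    ?phi_one ?phi_zer ?phi_neg.
  by split; ring.
- exists (Comp (ZSpider 2 1) (Tens Dx Dy)); rewrite !sem_compN !(@sum_splitE C 2 1 1) // !expn1 !sum2N.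
  rewrite !sem_tens01 // hx0 hx1 hy0 hy1 !(chk_sound C Z21_chk) //= ?phi_one ?phi_zer.
  by split; rewrite ?mul0r ?mul1r ?mulr1 ?add0r ?addr0.
Qed.

End H.


Section I.
Variable C : numClosedFieldType.
Notation sem := (@sem C).

Lemma sum_delta_l N a (F : nat -> C) : (a < N)%N ->
  \sum_(0 <= K < N) (a == K)%:R * F K = F a.
Proof.
move=> ha; rewrite big_mkord (bigD1 (Ordinal ha)) //= eqxx mul1r big1 ?addr0 // => q hq.
have -> : (a == (q : nat)) = false.
  by apply/negbTE; apply: contra hq => /eqP e; apply/eqP/val_inj.
by rewrite /= mul0r.
Qed.

Lemma sem_tensL0 m1 n2 m2 (D1 : diagram 0 m1) (D2 : diagram n2 m2) a b e :
  (b < 2 ^ m2)%N -> (e < 2 ^ n2)%N -> sem (Tens D1 D2 : diagram n2 (m1 + m2)) (a * 2 ^ m2 + b) e = sem D1 a 0 * sem D2 b e.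
Proof. by move=> hb he; exact: (@sem_tensD C _ _ _ _ D1 D2 a b 0 e hb he). Qed.

Lemma sem_tensR0 n1 m1 n2 (D1 : diagram n1 m1) (D2 : diagram n2 0) a c e :
  (e < 2 ^ n2)%N -> sem (Tens D1 D2) a (c * 2 ^ n2 + e) = sem D1 a c * sem D2 0 e.
Proof. by move=> he; rewrite -{1}[a]addn0 -{1}[a]muln1; exact: (@sem_tensD C _ _ _ _ D1 D2 a 0 c e isT he). Qed.

Definition Pk k z (De : diagram 0 1) : diagram k k :=
  Comp (Tk k z : diagram (1 + k) k) (Tens De (idd k) : diagram k (1 + k)).

Lemma sem_Pk k z De l x x' : sem De 0 0 = 1 -> sem De 1 0 = l ->
  (z < 2 ^ k)%N -> (x < 2 ^ k)%N -> (x' < 2 ^ k)%N ->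
  sem (Pk k z De) x x' = (x == x')%:R * (if x == z then l else 1).
Proof.
move=> h0 h1 hz hx hx'.
rewrite /Pk sem_compN (@sum_splitE C (1 + k) 1 k) // expn1 sum2N.
under eq_big_nat => q /andP[_ hq] do rewrite sem_Tk // sem_tensL0 // sem_idd //.
under [X in _ + X = _]eq_big_nat => q /andP[_ hq] do rewrite sem_Tk // sem_tensL0 // sem_idd //.
rewrite !sum_delta_c // h0 h1.
by case: (x == x'); case: (x == z); rewrite /= ?mul0r ?mul1r ?add0r ?addr0.
Qed.

Lemma diag_ex k (f : nat -> C) : (forall x, (x < 2 ^ k)%N -> Enc (f x)) ->
  forall s, exists D : diagram k k, forall x x', (x < 2 ^ k)%N -> (x' < 2 ^ k)%N ->
    sem D x x' = (x == x')%:R * (if (x < s)%N then f x else 1).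
Proof.
move=> hf; elim => [|s [D hD]].
  by exists (idd k) => x x' hx hx'; rewrite sem_idd // mulr1.
case: (ltnP s (2 ^ k)) => hs; last first.
  exists D => x x' hx hx'; rewrite hD //.
  by rewrite (leq_trans hx hs) (leq_trans hx (leqW hs)).
case: (hf s hs) => De [h0 h1].
exists (Comp (Pk k s De) D) => x x' hx hx'.
rewrite sem_compN.
under eq_big_nat => K /andP[_ hK] do rewrite (@sem_Pk k s De (f s) x K h0 h1) // hD // -mulrA.
rewrite sum_delta_l //.
case: (ltngtP x s) => h.
- by rewrite mul1r ltnS (ltnW h).
- by rewrite mul1r ltnS leqNgt h.
- by rewrite h ltnSn mulr1 mulrC.
Qed.

Fixpoint plusN m : diagram 0 m :=
  match m with O => Empty | m'.+1 => Tens Plus (plusN m') end.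
Fixpoint discN n : diagram n 0 :=
  match n with O => Empty | n'.+1 => Tens Disc (discN n') end.

Lemma sem_Empty : sem Empty 0 0 = 1.
Proof. by rewrite ev_sound /= phi_one. Qed.

Lemma sem_plusN m y : (y < 2 ^ m)%N -> sem (plusN m) y 0 = 1.
Proof.
elim: m y => [|m IH] y hy.
  by move: hy; rewrite expn0 ltnS leqn0 => /eqP ->; rewrite sem_Empty.
case: (digits hy) => ya [yr [-> hya hyr]].
change (sem (Tens Plus (plusN m) : diagram 0 (1 + m)) (ya * 2 ^ m + yr) 0 = 1).
rewrite sem_tensL0 // IH //.
by rewrite (chk_sound C Plus_chk) // phi_one mulr1.
Qed.

Lemma sem_discN n x : (x < 2 ^ n)%N -> sem (discN n) 0 x = 1.
Proof.
elim: n x => [|n IH] x hx.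
  by move: hx; rewrite expn0 ltnS leqn0 => /eqP ->; rewrite sem_Empty.
case: (digits hx) => xa [xr [-> hxa hxr]].
change (sem (Tens Disc (discN n) : diagram (1 + n) (0 + 0)) 0 (xa * 2 ^ n + xr) = 1).
rewrite sem_tensR0 // IH //.
by rewrite (chk_sound C Disc_chk) // phi_one mulr1.
Qed.

Lemma comp_diag k n (D : diagram k k) (E : diagram n k) (g : nat -> C) a b :
  (forall a b, (a < 2 ^ k)%N -> (b < 2 ^ k)%N -> sem D a b = (a == b)%:R * g a) ->
  (a < 2 ^ k)%N -> sem (Comp D E) a b = g a * sem E a b.
Proof.
move=> hD ha; rewrite sem_compN.
under eq_big_nat => K /andP[_ hK] do rewrite hD // -mulrA.
by rewrite sum_delta_l.
Qed.

Lemma idx_lt m n p q : (p < 2 ^ m)%N -> (q < 2 ^ n)%N -> (p * 2 ^ n + q < 2 ^ (m + n))%N.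
Proof.
move=> hp hq; rewrite expnD.
apply: (@leq_trans (p.+1 * 2 ^ n)); first by rewrite mulSn addnC ltn_add2r.
by rewrite leq_mul2r hp orbT.
Qed.

Lemma final_ex m n (fM : nat -> C) : (forall x, (x < 2 ^ (m + n))%N -> Enc (fM x)) ->
  exists D : diagram n (m + 0), forall y x, (y < 2 ^ m)%N -> (x < 2 ^ n)%N ->
    sem D y x = fM (y * 2 ^ n + x)%N.
Proof.
move=> hf; case: (diag_ex hf (2 ^ (m + n))) => DQ hDQ.
exists (Comp (Tens (idd m) (discN n)) (Comp DQ (Tens (plusN m) (idd n)))) => y x hy hx.
rewrite sem_compN (@sum_splitE C (m + n) m n) //.
have ey : y = (y * 2 ^ 0 + 0)%N by rewrite muln1 addn0.
under eq_big_nat => p /andP[_ hp].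
  under eq_big_nat => q /andP[_ hq] do
    rewrite sem_tensR0 // sem_idd // sem_discN // (comp_diag _ _ hDQ) ?idx_lt //
      sem_tensL0 // sem_plusN // sem_idd // !mul1r !mulr1 [(q == x)]eq_sym [X in _ * X]mulrC mulrCA.
  rewrite sum_delta_l //.
  over.
rewrite sum_delta_l // idx_lt //.
Qed.

End I.


Section J.
Variable C : numClosedFieldType.
Notation R := (@in_Zi_isqrt2 C).

Lemma R0 : R 0.
Proof. by have := inR_add (inR_one C) (inR_opp (inR_one C)); rewrite addrN. Qed.

Lemma Rmuln x k : R x -> R (x *+ k).
Proof.
move=> hx; elim: k => [|k IH]; first by rewrite mulr0n; exact: R0.
by rewrite mulrS; apply: inR_add.
Qed.

Lemma Rnat k : R k%:R.
Proof. exact: Rmuln (inR_one C). Qed.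

Lemma Rexp x k : R x -> R (x ^+ k).
Proof.
move=> hx; elim: k => [|k IH]; first by rewrite expr0; exact: inR_one.
by rewrite exprS; apply: inR_mul.
Qed.

Lemma Rsum (I : finType) (F : I -> C) : (forall i, R (F i)) -> R (\sum_i F i).
Proof. move=> h; apply: (big_ind R) => //; [exact: R0 | exact: inR_add]. Qed.

Lemma Romega : R (omega8 C).
Proof. by apply: inR_mul; [apply: inR_add; [exact: inR_one | exact: inR_i] | exact: inR_isqrt2]. Qed.

Lemma Rm1 : R (-1). Proof. exact: inR_opp (inR_one C). Qed.

Lemma interp_R n m (D : diagram n m) i j : R (interp C D i j).
Proof.
elim: D i j => [n' m'|k||||||| n' k m' D1 IH1 D2 IH2 | n1 m1 n2 m2 D1 IH1 D2 IH2] i j /=.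
- by rewrite mxE; apply: inR_add; apply: Rnat.
- rewrite mxE; case: ifP => _; last exact: R0.
  by case: ifP => _; [exact: inR_one | apply: Rexp; exact: Romega].
- by rewrite mxE; apply: inR_mul; [exact: inR_isqrt2 | apply: Rexp; exact: Rm1].
- by rewrite mxE; apply: Rnat.
- by rewrite mxE; apply: Rmuln; exact: inR_one.
- by rewrite mxE; apply: Rmuln; exact: inR_one.
- by rewrite mxE; apply: Rnat.
- by rewrite mxE; apply: Rnat.
- by rewrite mxE; apply: Rsum => K; apply: inR_mul.
- by rewrite /kron castmxE mxE; apply: inR_mul.
Qed.

Lemma ent_R p q (M : 'M[C]_(p, q)) a b : (forall i j, R (M i j)) -> R (ent M a b).
Proof.
move=> h; case: (ltnP a p) => ha; last by rewrite ent_oobl -?leqNgt //; exact: R0.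
case: (ltnP b q) => hb; last by rewrite ent_oobr -?leqNgt //; exact: R0.
by rewrite (entE M (Ordinal ha) (Ordinal hb)).
Qed.

End J.

Unset Implicit Arguments.
Theorem mainTheorem1 (C : numClosedFieldType) (m n : nat)
    (M : 'M[C]_(2 ^ m, 2 ^ n)) :
  (exists D : diagram n m, interp C D = M) <->
  (forall i j, in_Zi_isqrt2 (M i j)).
Proof.
split; first by move=> [D <-]; apply: interp_R.
move=> hM.
pose fM K := ent M (K %/ 2 ^ n)%N (K %% 2 ^ n)%N.
have hf : forall K, (K < 2 ^ (m + n))%N -> Enc (fM K).
  by move=> K _; apply: enc_R; apply: ent_R.
case: (final_ex hf) => D hD.
exists (castD (addn0 m) D).
apply/matrixP => i j.
rewrite -(entE (interp C _) i j) -(entE M i j).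
change (sem C (castD (addn0 m) D) i j = ent M i j).
have hn := expn2_gt0 n.
by rewrite sem_castD hD // /fM divnMDl // divn_small // addn0 modnMDl modn_small.
Qed.
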